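(* Let $k$ be a positive semidefinite covariance kernel, $x_1,\dots,x_N\in\mathbb{R}^d$, and $K$ the $N\times N$ real symmetric positive semidefinite matrix with entries $K_{ij}=k(x_i,x_j)$. Let $\sigma>0$, $\varepsilon\ge0$, and let $\Phi\in\mathbb{C}^{N\times M}$ with $M<N$ be such that $\tilde K=\Phi\Phi^*$ satisfies $\|\tilde K-K\|\le N\varepsilon$. Let $A_{\mathrm{FS}}=\Phi\Phi^*+\sigma^2I_N$ and $A_{\mathrm{WS}}=\Phi^*\Phi+\sigma^2I_M$, with condition numbers $\kappa_{\mathrm{FS}}=\kappa(A_{\mathrm{FS}})$ and $\kappa_{\mathrm{WS}}=\kappa(A_{\mathrm{WS}})$. Then both satisfy \[ \kappa_{\mathrm{FS}},\ \kappa_{\mathrm{WS}}\;\le\;\left(1+\frac{\varepsilon N}{\sigma^2}\right)\kappa(K+\sigma^2I)+\frac{\varepsilon N}{\sigma^2}. \]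
   Context: $\Phi^*$ denotes the conjugate transpose of $\Phi$; $\|\cdot\|$ is the spectral norm; $\kappa(A)=\|A\|\,\|A^{-1}\|$. *)

(* Defs.v *)
From HB Require Import structures.
From mathcomp Require Import all_boot all_order all_algebra.
From mathcomp Require Import boolp classical_sets reals.
From mathcomp.real_closed Require Import complex.
Set Implicit Arguments. Unset Strict Implicit. Unset Printing Implicit Defensive.
Import Order.TTheory GRing.Theory Num.Theory.
Local Open Scope ring_scope.
Local Open Scope classical_set_scope.

Definition ctrmx (R : rcfType) m n (A : 'M[R[i]]_(m, n)) : 'M[R[i]]_(n, m) :=
  (map_mx (@conjc R) A)^T.

Definition vnorm2 (R : rcfType) n (v : 'cV[R[i]]_n) : R :=
  Num.sqrt (\sum_i (@complex.Re R (v i 0) ^+ 2 + @complex.Im R (v i 0) ^+ 2)).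

Definition specnorm (R : realType) m n (A : 'M[R[i]]_(m, n)) : R :=
  sup [set vnorm2 (A *m v) | v in [set v : 'cV[R[i]]_n | vnorm2 v <= 1]].

Definition condnum (R : realType) n (A : 'M[R[i]]_n) : R :=
  specnorm A * specnorm (invmx A).

Definition cplx_mx (R : rcfType) m n (A : 'M[R]_(m, n)) : 'M[R[i]]_(m, n) :=
  map_mx (fun r => r%:C%C) A.

Definition psd_kernel (R : realType) (d : nat) (k : 'rV[R]_d -> 'rV[R]_d -> R) :=
  (forall x y, k x y = k y x) /\
  (forall (n : nat) (x : 'I_n -> 'rV[R]_d) (c : 'I_n -> R),
      0 <= \sum_i \sum_j c i * c j * k (x i) (x j)).

Definition gram_mx (R : realType) d N (k : 'rV[R]_d -> 'rV[R]_d -> R)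
  (x : 'I_N -> 'rV[R]_d) : 'M[R]_N := \matrix_(i, j) k (x i) (x j).

(* Main.v *)
Require Import Defs.
From HB Require Import structures.
From mathcomp Require Import all_boot all_order all_algebra.
From mathcomp Require Import boolp classical_sets reals.
From mathcomp.real_closed Require Import complex.
From mathcomp Require Import ring lra.
Import Order.TTheory GRing.Theory Num.Theory.
Set Implicit Arguments. Unset Strict Implicit. Unset Printing Implicit Defensive.
Local Open Scope ring_scope.

Definition sqv (R : realType) n (v : 'cV[R[i]]_n) : R :=
  \sum_i (complex.Re (v i 0) ^+ 2 + complex.Im (v i 0) ^+ 2).
Definition rdot (R : realType) n (u v : 'cV[R[i]]_n) : R :=
  \sum_i (complex.Re (u i 0) * complex.Re (v i 0) + complex.Im (u i 0) * complex.Im (v i 0)).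

Lemma sqv_ge0 (R : realType) n (v : 'cV[R[i]]_n) : 0 <= sqv v.
Proof. by apply: sumr_ge0 => i _; rewrite addr_ge0 // sqr_ge0. Qed.

Lemma vnorm2E (R : realType) n (v : 'cV[R[i]]_n) : vnorm2 v = Num.sqrt (sqv v).
Proof. by []. Qed.

Lemma vnorm2_ge0 (R : realType) n (v : 'cV[R[i]]_n) : 0 <= vnorm2 v.
Proof. exact: sqrtr_ge0. Qed.

Lemma vnorm2_sq (R : realType) n (v : 'cV[R[i]]_n) : vnorm2 v ^+ 2 = sqv v.
Proof. by rewrite vnorm2E sqr_sqrtr // sqv_ge0. Qed.

Lemma rdotvv (R : realType) n (v : 'cV[R[i]]_n) : rdot v v = sqv v.
Proof. by apply: eq_bigr => i _; rewrite !expr2. Qed.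

Lemma sqv_eq0 (R : realType) n (v : 'cV[R[i]]_n) : sqv v = 0 -> v = 0.
Proof.
move=> /eqP; rewrite psumr_eq0 => [/allP H|i _]; last by rewrite addr_ge0 // sqr_ge0.
apply/matrixP => i j; rewrite (ord1 j) mxE.
have /implyP := H i (mem_index_enum _); move=> /(_ isT).
rewrite paddr_eq0 ?sqr_ge0 // !sqrf_eq0 => /andP[/eqP h1 /eqP h2].
by apply/eqP; rewrite eq_complex /= h1 h2 !eqxx.
Qed.

Lemma vnorm2_eq0 (R : realType) n (v : 'cV[R[i]]_n) : vnorm2 v = 0 -> v = 0.
Proof. by move=> h; apply: sqv_eq0; rewrite -vnorm2_sq h expr0n. Qed.

Definition cn (R : realType) (c : R[i]) : R := complex.Re c ^+ 2 + complex.Im c ^+ 2.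

Lemma sqvZ (R : realType) n (c : R[i]) (v : 'cV[R[i]]_n) : sqv (c *: v) = cn c * sqv v.
Proof.
rewrite /sqv mulr_sumr; apply: eq_bigr => i _; rewrite mxE /cn.
case: c => a b; case: (v i 0) => x y /=. ring.
Qed.

Lemma rdotZ (R : realType) n (r : R) (u v : 'cV[R[i]]_n) : rdot u (r%:C%C *: v) = r * rdot u v.
Proof.
rewrite /rdot mulr_sumr; apply: eq_bigr => i _; rewrite mxE.
case: (u i 0) => a b; case: (v i 0) => x y /=. ring.
Qed.

Lemma rdotD (R : realType) n (u v w : 'cV[R[i]]_n) : rdot u (v + w) = rdot u v + rdot u w.
Proof.
rewrite /rdot -big_split; apply: eq_bigr => i _; rewrite mxE.
case: (u i 0) => a b; case: (v i 0) => x y; case: (w i 0) => z t /=. ring.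
Qed.

Lemma rdotN (R : realType) n (u v : 'cV[R[i]]_n) : rdot u (- v) = - rdot u v.
Proof.
rewrite /rdot -sumrN; apply: eq_bigr => i _; rewrite mxE.
case: (u i 0) => a b; case: (v i 0) => x y /=. ring.
Qed.

Lemma rdotC (R : realType) n (u v : 'cV[R[i]]_n) : rdot u v = rdot v u.
Proof. by apply: eq_bigr => i _; rewrite mulrC [X in _ + X]mulrC. Qed.

Lemma sqvN (R : realType) n (v : 'cV[R[i]]_n) : sqv (- v) = sqv v.
Proof. by rewrite -rdotvv rdotN rdotC rdotN opprK rdotvv. Qed.

Lemma vnorm2N (R : realType) n (v : 'cV[R[i]]_n) : vnorm2 (- v) = vnorm2 v.
Proof. by rewrite !vnorm2E sqvN. Qed.

Lemma rdot0l (R : realType) n (w : 'cV[R[i]]_n) : rdot 0 w = 0.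
Proof. by rewrite /rdot big1 // => i _; rewrite mxE /= !mul0r addr0. Qed.

Lemma sq_le_real (R : realType) (x y : R) : 0 <= y -> x ^+ 2 <= y ^+ 2 -> x <= y.
Proof. move=> hy h; nra. Qed.

Lemma CS (R : realType) n (u w : 'cV[R[i]]_n) : rdot u w <= vnorm2 u * vnorm2 w.
Proof.
set a := vnorm2 u; set b := vnorm2 w.
have H : 0 <= \sum_i ((b * complex.Re (u i 0) - a * complex.Re (w i 0)) ^+ 2
                 + (b * complex.Im (u i 0) - a * complex.Im (w i 0)) ^+ 2).
  by apply: sumr_ge0 => i _; rewrite addr_ge0 // sqr_ge0.
have E : \sum_i ((b * complex.Re (u i 0) - a * complex.Re (w i 0)) ^+ 2
                 + (b * complex.Im (u i 0) - a * complex.Im (w i 0)) ^+ 2)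
   = b ^+ 2 * sqv u + (- (2 * a * b)) * rdot u w + a ^+ 2 * sqv w.
  rewrite /sqv /rdot !mulr_sumr -!big_split /=; apply: eq_bigr => i _; ring.
rewrite E -!vnorm2_sq -/a -/b in H.
have a0 : 0 <= a by exact: vnorm2_ge0.
have b0 : 0 <= b by exact: vnorm2_ge0.
have [ab0|] := boolP (0 < a * b).
  nra.
rewrite -leNgt => hab.
have : a * b = 0 by apply/eqP; rewrite eq_le hab mulr_ge0.
move/eqP; rewrite mulf_eq0 => /orP[/eqP ha|/eqP hb].
  by rewrite ha mul0r (vnorm2_eq0 ha) rdot0l.
by rewrite hb mulr0 rdotC (vnorm2_eq0 hb) rdot0l.
Qed.

Lemma sqvD (R : realType) n (u w : 'cV[R[i]]_n) :
  sqv (u + w) = sqv u + 2 * rdot u w + sqv w.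
Proof.
rewrite -!rdotvv rdotD (rdotC (u + w) u) (rdotC (u + w) w) !rdotD (rdotC w u). ring.
Qed.

Lemma vnorm2D (R : realType) n (u w : 'cV[R[i]]_n) :
  vnorm2 (u + w) <= vnorm2 u + vnorm2 w.
Proof.
apply: sq_le_real; first by rewrite addr_ge0 // vnorm2_ge0.
rewrite vnorm2_sq sqvD -!vnorm2_sq.
have := CS u w; nra.
Qed.

Lemma vnorm2Z (R : realType) n (c : R[i]) (v : 'cV[R[i]]_n) :
  vnorm2 (c *: v) = Num.sqrt (cn c) * vnorm2 v.
Proof. by rewrite !vnorm2E sqvZ sqrtrM // /cn addr_ge0 // sqr_ge0. Qed.

Lemma vnorm2_sum (R : realType) n (I : finType) (f : I -> 'cV[R[i]]_n) :
  vnorm2 (\sum_j f j) <= \sum_j vnorm2 (f j).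
Proof.
elim/big_rec2: _ => [|j y1 y2 _ IH].
  by rewrite vnorm2E /sqv big1 ?sqrtr0 // => i _; rewrite mxE /= expr0n addr0.
by apply: le_trans (vnorm2D _ _) _; rewrite lerD2l.
Qed.

Lemma mulmx_cols (R : realType) m n (A : 'M[R[i]]_(m, n)) (v : 'cV[R[i]]_n) :
  A *m v = \sum_j (v j 0) *: col j A.
Proof.
apply/matrixP => i k; rewrite (ord1 k) !mxE summxE; apply: eq_bigr => j _.
by rewrite !mxE mulrC.
Qed.

Lemma cn_le (R : realType) n (v : 'cV[R[i]]_n) j : cn (v j 0) <= sqv v.
Proof.
rewrite /sqv (bigD1 j) //= lerDl; apply: sumr_ge0 => i _.
by rewrite addr_ge0 // sqr_ge0.
Qed.

Lemma vnorm2_le1 (R : realType) n (v : 'cV[R[i]]_n) : (vnorm2 v <= 1) = (sqv v <= 1).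
Proof. by rewrite vnorm2E -{1}sqrtr1 ler_sqrt ?ler01. Qed.

Lemma specset_bounded (R : realType) m n (A : 'M[R[i]]_(m, n)) :
  has_ubound [set vnorm2 (A *m v) | v in [set v : 'cV[R[i]]_n | vnorm2 v <= 1]].
Proof.
exists (\sum_j vnorm2 (col j A)) => _ [v /= hv <-].
rewrite mulmx_cols; apply: le_trans (vnorm2_sum _) _.
apply: ler_sum => j _; rewrite vnorm2Z.
rewrite -[X in _ <= X]mul1r ler_wpM2r ?vnorm2_ge0 //.
rewrite -sqrtr1 ler_sqrt //; apply: le_trans (cn_le v j) _.
by rewrite -vnorm2_le1.
Qed.

Lemma specnorm_ub (R : realType) m n (A : 'M[R[i]]_(m, n)) v :
  vnorm2 v <= 1 -> vnorm2 (A *m v) <= specnorm A.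
Proof.
move=> hv; apply: (ub_le_sup (specset_bounded A)); by exists v.
Qed.

Lemma specnorm_le (R : realType) m n (A : 'M[R[i]]_(m, n)) (C : R) :
  (forall v, vnorm2 v <= 1 -> vnorm2 (A *m v) <= C) -> specnorm A <= C.
Proof.
move=> H; apply: ge_sup.
  exists (vnorm2 (A *m 0)), 0 => //=.
  by rewrite vnorm2E /sqv big1 ?sqrtr0 ?ler01 // => i _; rewrite mxE /= expr0n addr0.
by move=> _ [v /= hv <-]; exact: H.
Qed.

Lemma vnorm2_0 (R : realType) n : vnorm2 (0 : 'cV[R[i]]_n) = 0.
Proof. by rewrite vnorm2E /sqv big1 ?sqrtr0 // => i _; rewrite mxE /= expr0n addr0. Qed.

Lemma specnorm_ge0 (R : realType) m n (A : 'M[R[i]]_(m, n)) : 0 <= specnorm A.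
Proof.
apply: le_trans (specnorm_ub A (v := 0) _); first exact: vnorm2_ge0.
by rewrite vnorm2_0 ler01.
Qed.

Lemma opbound (R : realType) m n (A : 'M[R[i]]_(m, n)) v :
  vnorm2 (A *m v) <= specnorm A * vnorm2 v.
Proof.
have [v0|] := boolP (vnorm2 v == 0).
  by rewrite (eqP v0) mulr0 (vnorm2_eq0 (eqP v0)) mulmx0 vnorm2_0.
move=> hv; have a0 : 0 < vnorm2 v by rewrite lt_def hv vnorm2_ge0.
set a := vnorm2 v in a0 hv *.
have ai : 0 <= a^-1 by rewrite invr_ge0 ltW.
have h1 : vnorm2 ((a^-1)%:C%C *: v) <= 1.
  rewrite vnorm2Z /cn /= expr0n addr0 sqrtr_sqr (ger0_norm ai) -/a.
  by rewrite mulVf.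
have := specnorm_ub A h1; rewrite -scalemxAr vnorm2Z /cn /= expr0n addr0.
rewrite sqrtr_sqr (ger0_norm ai) => h.
by rewrite -ler_pdivrMr // mulrC.
Qed.

Lemma ctrmx_mul (R : realType) m n p (A : 'M[R[i]]_(m, n)) (B : 'M[R[i]]_(n, p)) :
  ctrmx (A *m B) = ctrmx B *m ctrmx A.
Proof. by rewrite /ctrmx map_mxM trmx_mul. Qed.

Lemma ctrmxK (R : realType) m n (A : 'M[R[i]]_(m, n)) : ctrmx (ctrmx A) = A.
Proof.
apply/matrixP => i j; rewrite !mxE; exact: conjcK.
Qed.

Lemma ctrmxD (R : realType) m n (A B : 'M[R[i]]_(m, n)) :
  ctrmx (A + B) = ctrmx A + ctrmx B.
Proof. by rewrite /ctrmx map_mxD linearD. Qed.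

Lemma ctrmx_scal (R : realType) n (s : R) : ctrmx (s%:C%C%:M : 'M[R[i]]_n) = s%:C%C%:M.
Proof. by rewrite /ctrmx map_scalar_mx tr_scalar_mx /= oppr0. Qed.

Lemma ctrmx0 (R : realType) m n : ctrmx (0 : 'M[R[i]]_(m, n)) = 0.
Proof. by apply/matrixP => i j; rewrite !mxE conjc0. Qed.

Lemma rdot_cdot (R : realType) n (u w : 'cV[R[i]]_n) :
  rdot u w = complex.Re ((ctrmx u *m w) 0 0).
Proof.
rewrite mxE /rdot.
rewrite (big_morph (@complex.Re R) (id1 := 0) (op1 := +%R)) //; last first.
  by move=> [a b] [c d].
apply: eq_bigr => i _; rewrite !mxE.
by case: (u i 0) => a b; case: (w i 0) => c d /=; ring.
Qed.

Lemma rdot_adj (R : realType) m n (A : 'M[R[i]]_(m, n)) u v :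
  rdot u (A *m v) = rdot (ctrmx A *m u) v.
Proof. by rewrite !rdot_cdot ctrmx_mul ctrmxK mulmxA. Qed.

Lemma rdot_scal (R : realType) n (s : R) (u w : 'cV[R[i]]_n) :
  rdot u ((s%:C%C%:M : 'M[R[i]]_n) *m w) = s * rdot u w.
Proof. by rewrite mul_scalar_mx rdotZ. Qed.

Lemma quadF (R : realType) n p (Psi : 'M[R[i]]_(n, p)) (s : R) (u : 'cV[R[i]]_n) :
  rdot u ((Psi *m ctrmx Psi + s%:C%C%:M) *m u) = sqv (ctrmx Psi *m u) + s * sqv u.
Proof.
by rewrite mulmxDl rdotD -mulmxA rdot_adj rdotvv rdot_scal rdotvv.
Qed.

Lemma lower_from_quad (R : realType) n (X : 'M[R[i]]_n) (c : R) :
  0 < c -> (forall u, c * sqv u <= rdot u (X *m u)) ->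
  forall u, c * vnorm2 u <= vnorm2 (X *m u).
Proof.
move=> c0 H u.
have h := le_trans (H u) (CS u (X *m u)).
rewrite -vnorm2_sq in h.
have a0 := vnorm2_ge0 u; have b0 := vnorm2_ge0 (X *m u).
have [ua|] := boolP (vnorm2 u == 0).
  by rewrite (eqP ua) mulr0.
move=> ha; have a1 : 0 < vnorm2 u by rewrite lt_def ha a0.
nra.
Qed.

Lemma unit_from_lower (R : realType) n (X : 'M[R[i]]_n) (c : R) :
  ctrmx X = X -> 0 < c -> (forall u, c * vnorm2 u <= vnorm2 (X *m u)) ->
  X \in unitmx.
Proof.
move=> hX c0 H; rewrite unitmxE unitfE; apply/negP => /det0P [v v0 hv].
have e : X *m ctrmx v = 0 by rewrite -{1}hX -ctrmx_mul hv ctrmx0.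
have := H (ctrmx v); rewrite e vnorm2_0 => h.
have : vnorm2 (ctrmx v) = 0.
  apply/eqP; rewrite eq_le vnorm2_ge0 andbT.
  by rewrite -(pmulr_rle0 _ c0).
move/vnorm2_eq0 => /(congr1 (@ctrmx _ _ _)); rewrite ctrmxK ctrmx0 => v00.
by rewrite v00 eqxx in v0.
Qed.

Lemma inv_bound (R : realType) n (X : 'M[R[i]]_n) (c : R) :
  X \in unitmx -> 0 < c -> (forall u, c * vnorm2 u <= vnorm2 (X *m u)) ->
  specnorm (invmx X) <= c^-1.
Proof.
move=> hX c0 H; apply: specnorm_le => w hw.
have := H (invmx X *m w); rewrite mulKVmx // => h.
rewrite -[c^-1]mulr1 ler_pdivlMl //; exact: le_trans h hw.
Qed.

Lemma condnum_le (R : realType) n (X : 'M[R[i]]_n) (c : R) :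
  X \in unitmx -> 0 < c -> (forall u, c * vnorm2 u <= vnorm2 (X *m u)) ->
  condnum X <= specnorm X / c.
Proof.
move=> hX c0 H; rewrite /condnum ler_wpM2l ?specnorm_ge0 //.
exact: inv_bound.
Qed.

Lemma herm_F (R : realType) n p (Psi : 'M[R[i]]_(n, p)) (s : R) :
  ctrmx (Psi *m ctrmx Psi + s%:C%C%:M) = Psi *m ctrmx Psi + s%:C%C%:M.
Proof. by rewrite ctrmxD ctrmx_mul ctrmxK ctrmx_scal. Qed.

Lemma vnorm2_scal (R : realType) n (s : R) (u : 'cV[R[i]]_n) : 0 <= s ->
  vnorm2 ((s%:C%C%:M : 'M[R[i]]_n) *m u) = s * vnorm2 u.
Proof.
move=> s0; rewrite mul_scalar_mx vnorm2Z /cn /= expr0n addr0 sqrtr_sqr.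
by rewrite ger0_norm.
Qed.

Lemma sqv_const1 (R : realType) n : sqv (const_mx 1 : 'cV[R[i]]_n) = n%:R.
Proof.
rewrite /sqv (eq_bigr (fun _ => 1)); last by move=> i _; rewrite mxE /= expr1n expr0n addr0.
by rewrite sumr_const card_ord.
Qed.

Lemma normW_le (R : realType) N M (Phi : 'M[R[i]]_(N, M)) (s : R) :
  (0 < N)%N -> 0 < s ->
  specnorm (ctrmx Phi *m Phi + s%:C%C%:M) <= specnorm (Phi *m ctrmx Phi + s%:C%C%:M).
Proof.
move=> N0 s0.
set f := specnorm (Phi *m ctrmx Phi + s%:C%C%:M).
have P : forall w, sqv (ctrmx Phi *m w) <= (f - s) * sqv w.
  move=> w; have h1 := quadF Phi s w.
  have h2 := CS w ((Phi *m ctrmx Phi + s%:C%C%:M) *m w).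
  have h3 := opbound (Phi *m ctrmx Phi + s%:C%C%:M) w; rewrite -/f in h3.
  have a0 := vnorm2_ge0 w.
  have h4 : vnorm2 w * vnorm2 ((Phi *m ctrmx Phi + s%:C%C%:M) *m w) <= vnorm2 w * (f * vnorm2 w).
    by rewrite ler_wpM2l.
  rewrite -(vnorm2_sq w) -(vnorm2_sq (ctrmx Phi *m w)); rewrite -(vnorm2_sq w) -(vnorm2_sq (ctrmx Phi *m w)) in h1. nra.
have q0 : 0 <= f - s.
  have := P (const_mx 1); rewrite sqv_const1 => h.
  have : 0 < N%:R :> R by rewrite ltr0n.
  have := sqv_ge0 (ctrmx Phi *m const_mx 1). nra.
have f0 : 0 <= f by exact: specnorm_ge0.
apply: specnorm_le => u hu.
set a := vnorm2 u; set p := vnorm2 (Phi *m u); set r := vnorm2 (ctrmx Phi *m (Phi *m u)).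
have a0 : 0 <= a by exact: vnorm2_ge0.
have p0 : 0 <= p by exact: vnorm2_ge0.
have r0 : 0 <= r by exact: vnorm2_ge0.
have e1 : p ^+ 2 <= a * r.
  rewrite /p vnorm2_sq -rdotvv.
  have -> : rdot (Phi *m u) (Phi *m u) = rdot u (ctrmx Phi *m (Phi *m u)).
    by rewrite (rdot_adj (ctrmx Phi)) ctrmxK.
  exact: CS.
have e2 : r ^+ 2 <= (f - s) * p ^+ 2 by rewrite /r /p !vnorm2_sq; exact: P.
have e3 : r <= (f - s) * a.
  have [r00|rp] := boolP (r == 0); first by rewrite (eqP r00) mulr_ge0.
  have rpos : 0 < r by rewrite lt_def rp r0.
  have e4 : (f - s) * p ^+ 2 <= (f - s) * (a * r) by rewrite ler_wpM2l.
  nra.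
rewrite mulmxDl -mulmxA.
apply: le_trans (vnorm2D _ _) _; rewrite (vnorm2_scal _ (ltW s0)) -/r -/a.
have : a <= 1 by [].
nra.
Qed.

Lemma Re_sum (R : realType) (I : finType) (f : I -> R[i]) :
  complex.Re (\sum_j f j) = \sum_j complex.Re (f j).
Proof. by rewrite (big_morph (@complex.Re R) (id1 := 0) (op1 := +%R)) // => [[a b] [c d]]. Qed.

Lemma Im_sum (R : realType) (I : finType) (f : I -> R[i]) :
  complex.Im (\sum_j f j) = \sum_j complex.Im (f j).
Proof. by rewrite (big_morph (@complex.Im R) (id1 := 0) (op1 := +%R)) // => [[a b] [c d]]. Qed.

Lemma herm_K (R : realType) d N (k : 'rV[R]_d -> 'rV[R]_d -> R) (x : 'I_N -> 'rV[R]_d) :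
  psd_kernel k -> ctrmx (cplx_mx (gram_mx k x)) = cplx_mx (gram_mx k x).
Proof.
move=> [sym _]; apply/matrixP => i j; rewrite !mxE /= oppr0 sym //.
Qed.

Lemma quadK (R : realType) d N (k : 'rV[R]_d -> 'rV[R]_d -> R) (x : 'I_N -> 'rV[R]_d) u :
  psd_kernel k -> 0 <= rdot u (cplx_mx (gram_mx k x) *m u).
Proof.
move=> [_ psd].
have E : forall i, complex.Re (u i 0) * complex.Re ((cplx_mx (gram_mx k x) *m u) i 0)
   + complex.Im (u i 0) * complex.Im ((cplx_mx (gram_mx k x) *m u) i 0)
   = \sum_j (complex.Re (u i 0) * complex.Re (u j 0) * k (x i) (x j))
     + \sum_j (complex.Im (u i 0) * complex.Im (u j 0) * k (x i) (x j)).
  move=> i; rewrite mxE Re_sum Im_sum !mulr_sumr; congr (_ + _); apply: eq_bigr => j _;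
  rewrite !mxE; case: (u j 0) => a b /=; ring.
rewrite /rdot (eq_bigr _ (fun i _ => E i)) big_split /=.
apply: addr_ge0.
  exact: (psd N x (fun i => complex.Re (u i 0))).
exact: (psd N x (fun i => complex.Im (u i 0))).
Qed.

Lemma quadB (R : realType) d N (k : 'rV[R]_d -> 'rV[R]_d -> R) (x : 'I_N -> 'rV[R]_d) (s : R) u :
  psd_kernel k -> s * sqv u <= rdot u ((cplx_mx (gram_mx k x) + s%:C%C%:M) *m u).
Proof.
move=> hk; rewrite mulmxDl rdotD rdot_scal rdotvv lerDr; exact: quadK.
Qed.

Lemma kernel_vec (R : realType) N M (Phi : 'M[R[i]]_(N, M)) :
  (M < N)%N -> exists2 v : 'cV[R[i]]_N, v != 0 & ctrmx Phi *m v = 0.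
Proof.
move=> MN.
set A := (ctrmx Phi)^T.
have hr : (0 < \rank (kermx A))%N.
  rewrite mxrank_ker subn_gt0; apply: leq_ltn_trans (rank_leq_col A) MN.
have : kermx A != 0 by rewrite -mxrank_eq0 -lt0n.
have [|] := boolP [exists i, row i (kermx A) != 0]; last first.
  rewrite negb_exists => /forallP H; case/negP; apply/eqP/row_matrixP => i.
  by rewrite row0; apply/eqP; rewrite -[_ == _]negbK H.
move=> /existsP [i hi] _.
exists (row i (kermx A))^T; first by rewrite trmx_eq0.
have : (row i (kermx A) <= kermx A)%MS by exact: row_sub.
move/sub_kermxP => h.
by rewrite -[ctrmx Phi]trmxK -trmx_mul h trmx0.
Qed.

Lemma quad_disc (R : realType) (a b c : R) :
  (forall t, 0 <= a + 2 * t * b + t ^+ 2 * c) -> 0 <= c -> b ^+ 2 <= a * c.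
Proof.
move=> H c0.
have [cz|cp] := boolP (c == 0).
  rewrite (eqP cz) mulr0.
  have [bz|bn] := boolP (b == 0); first by rewrite (eqP bz) expr0n.
  have := H (- (a + 1) / (2 * b)); rewrite (eqP cz) mulr0 addr0.
  have -> : 2 * (- (a + 1) / (2 * b)) * b = - (a + 1).
    by field.
  move=> h; exfalso; move: h; rewrite opprD addrA subrr sub0r oppr_ge0 => h.
  by have := lt_le_trans ltr01 h; rewrite ltxx.
have cpos : 0 < c by rewrite lt_def cp c0.
have := H (- b / c); set t := - b / c => h.
have ht : t * c = - b by rewrite /t divfK.
nra.
Qed.

Lemma rdotZl (R : realType) n (r : R) (u v : 'cV[R[i]]_n) : rdot (r%:C%C *: u) v = r * rdot u v.
Proof. by rewrite rdotC rdotZ rdotC. Qed.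

Lemma rdotDl (R : realType) n (u v w : 'cV[R[i]]_n) : rdot (v + w) u = rdot v u + rdot w u.
Proof. by rewrite rdotC rdotD !(rdotC u). Qed.

Lemma lower_inv (R : realType) N M (Phi : 'M[R[i]]_(N, M)) (K : 'M[R[i]]_N) (s e : R) :
  0 < s -> ctrmx K = K ->
  (forall u, 0 <= rdot u (K *m u)) ->
  specnorm (Phi *m ctrmx Phi - K) <= e ->
  (M < N)%N ->
  (K + s%:C%C%:M) \in unitmx ->
  1 <= (s + e) * specnorm (invmx (K + s%:C%C%:M)).
Proof.
move=> s0 hK qK hD MN hB.
set B := K + s%:C%C%:M; set D := Phi *m ctrmx Phi - K; set F := Phi *m ctrmx Phi + s%:C%C%:M.
have [v v0 hv] := kernel_vec Phi MN.
set y := invmx B *m v.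
have By : B *m y = v by rewrite /y mulKVmx.
have hermB : ctrmx B = B by rewrite /B ctrmxD hK ctrmx_scal.
have eB : B = F - D.
  by rewrite /B /F /D opprB [RHS]addrC addrA subrK.
have Fv : F *m v = s%:C%C *: v.
  by rewrite /F mulmxDl -mulmxA hv mulmx0 add0r mul_scalar_mx.
set b := sqv v; set a := rdot v (B *m v); set cc := rdot y v.
have bpos : 0 < b.
  rewrite lt_def sqv_ge0 andbT; apply/eqP => h; move: v0; by rewrite (sqv_eq0 h) eqxx.
have qB : forall w, 0 <= rdot w (B *m w).
  by move=> w; rewrite /B mulmxDl rdotD rdot_scal rdotvv addr_ge0 // mulr_ge0 // ?sqv_ge0 // ltW.
have ha : a <= (s + e) * b.
  rewrite /a eB mulmxBl Fv rdotD rdotZ rdotvv rdotN.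
  have h1 : - rdot v (D *m v) <= vnorm2 v * vnorm2 (D *m v).
    by rewrite -rdotN -(vnorm2N (D *m v)); exact: CS.
  have h2 := opbound D v.
  have h3 : vnorm2 v * vnorm2 (D *m v) <= vnorm2 v * (specnorm D * vnorm2 v).
    by rewrite ler_wpM2l ?vnorm2_ge0.
  have h4 : specnorm D * vnorm2 v <= e * vnorm2 v by rewrite ler_wpM2r ?vnorm2_ge0.
  have h5 := vnorm2_ge0 v.
  have h6 : vnorm2 v ^+ 2 = b by rewrite vnorm2_sq.
  rewrite -/b; nra.
have hcc0 : 0 <= cc.
  by have := qB y; rewrite By.
have hcc : cc <= specnorm (invmx B) * b.
  apply: le_trans (CS y v) _.
  have := opbound (invmx B) v; rewrite -/y => h.
  have h5 := vnorm2_ge0 v.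
  have h6 : vnorm2 v ^+ 2 = b by rewrite vnorm2_sq.
  have h7 := vnorm2_ge0 y.
  nra.
have Q : forall t, 0 <= a + 2 * t * b + t ^+ 2 * cc.
  move=> t; have := qB (v + t%:C%C *: y).
  rewrite mulmxDr -scalemxAr By rdotD !rdotDl !rdotZ !rdotZl.
  have -> : rdot y (B *m v) = b.
    by rewrite rdot_adj hermB By rdotvv.
  rewrite rdotvv -/a -/b -/cc => h.
  have -> : a + 2 * t * b + t ^+ 2 * cc = a + t * b + (t * b + t * (t * cc)) by ring.
  exact: h.
have := quad_disc Q hcc0 => hd.
have hs := specnorm_ge0 (invmx B).
have hsp : 0 <= s + e.
  by rewrite addr_ge0 ?(ltW s0) // (le_trans (specnorm_ge0 D) hD).
have : b ^+ 2 <= ((s + e) * specnorm (invmx B)) * b ^+ 2.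
  apply: le_trans hd _.
  have : a * cc <= ((s + e) * b) * (specnorm (invmx B) * b).
    apply: ler_pM => //.
    by rewrite /a; exact: qB.
  move=> h; apply: le_trans h _; rewrite le_eqVlt; apply/orP; left; apply/eqP; ring.
have b2 : 0 < b ^+ 2 by rewrite exprn_gt0.
rewrite -{1}[b ^+ 2]mul1r ler_pM2r //.
Qed.

Lemma lowerPsi (R : realType) n p (Psi : 'M[R[i]]_(n, p)) (s : R) :
  0 < s -> forall u, s * vnorm2 u <= vnorm2 ((Psi *m ctrmx Psi + s%:C%C%:M) *m u).
Proof.
move=> s0; apply: lower_from_quad => // u; rewrite quadF lerDr; exact: sqv_ge0.
Qed.

Theorem lemma5p4 (R : realType) (d N M : nat)
  (k : 'rV[R]_d -> 'rV[R]_d -> R) (x : 'I_N -> 'rV[R]_d)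
  (sigma eps : R) (Phi : 'M[R[i]]_(N, M)) :
  psd_kernel k ->
  0 < sigma -> 0 <= eps -> (M < N)%N ->
  specnorm (Phi *m ctrmx Phi - cplx_mx (gram_mx k x)) <= N%:R * eps ->
  let K := cplx_mx (gram_mx k x) in
  let bound := (1 + eps * N%:R / sigma ^+ 2)
                 * condnum (K + (sigma ^+ 2)%:C%C%:M)
               + eps * N%:R / sigma ^+ 2 in
  condnum (Phi *m ctrmx Phi + (sigma ^+ 2)%:C%C%:M) <= bound /\
  condnum (ctrmx Phi *m Phi + (sigma ^+ 2)%:C%C%:M) <= bound.
Proof.
move=> hk sig0 eps0 MN hD K bound.
set s := sigma ^+ 2 in bound *.
have s0 : 0 < s by rewrite /s exprn_gt0.
set e := N%:R * eps.
have e0 : 0 <= e by rewrite mulr_ge0 // ler0n.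
have hbound : bound = ((specnorm (K + s%:C%C%:M) * specnorm (invmx (K + s%:C%C%:M))) * (s + e) + e) / s.
  rewrite /bound /condnum /e; field; by rewrite lt0r_neq0.
set B := K + s%:C%C%:M in hbound *.
have hermK : ctrmx K = K by exact: herm_K.
have lowB : forall u, s * vnorm2 u <= vnorm2 (B *m u).
  by apply: lower_from_quad => // u; exact: quadB.
have hermB : ctrmx B = B by rewrite /B ctrmxD hermK ctrmx_scal.
have uB : B \in unitmx by exact: unit_from_lower hermB s0 lowB.
have qK : forall u, 0 <= rdot u (K *m u) by move=> u; exact: quadK.
have linv := lower_inv s0 hermK qK hD MN uB.
set F := Phi *m ctrmx Phi + s%:C%C%:M.
have uF : F \in unitmx.
  exact: (unit_from_lower (herm_F Phi s) s0 (lowerPsi Phi s0)).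
have cF : condnum F <= specnorm F / s.
  exact: (condnum_le uF s0 (lowerPsi Phi s0)).
have eW : ctrmx Phi *m Phi + s%:C%C%:M = ctrmx Phi *m ctrmx (ctrmx Phi) + s%:C%C%:M.
  by rewrite ctrmxK.
have cW : condnum (ctrmx Phi *m Phi + s%:C%C%:M) <= specnorm (ctrmx Phi *m Phi + s%:C%C%:M) / s.
  rewrite eW; apply: (condnum_le _ s0 (lowerPsi (ctrmx Phi) s0)).
  exact: (unit_from_lower (herm_F (ctrmx Phi) s) s0 (lowerPsi (ctrmx Phi) s0)).
have N0 : (0 < N)%N by exact: leq_ltn_trans (leq0n M) MN.
have nW := normW_le Phi N0 s0; rewrite -/F in nW.
have nF : specnorm F <= specnorm B + e.
  apply: specnorm_le => u hu.
  have -> : F = B + (Phi *m ctrmx Phi - K) by rewrite /F /B [RHS]addrC addrA subrK.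
  rewrite mulmxDl; apply: le_trans (vnorm2D _ _) _.
  have h1 := opbound B u; have h2 := opbound (Phi *m ctrmx Phi - K) u.
  have h3 := specnorm_ge0 B; have h4 := specnorm_ge0 (Phi *m ctrmx Phi - K).
  apply: le_trans (lerD h1 h2) _; apply: lerD.
    exact: (ler_piMr h3 hu).
  exact: (le_trans (ler_piMr h4 hu) hD).
have hB0 := specnorm_ge0 B.
have hBi0 := specnorm_ge0 (invmx B).
have key : specnorm F / s <= bound.
  rewrite hbound ler_pM2r ?invr_gt0 //.
  apply: le_trans nF _; rewrite lerD2r.
  have -> : specnorm B * specnorm (invmx B) * (s + e) = specnorm B * ((s + e) * specnorm (invmx B)) by ring.
  exact: (ler_peMr hB0 linv).
split; first exact: le_trans cF key.
apply: le_trans cW _; apply: le_trans key.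
have si : 0 <= s^-1 by rewrite invr_ge0; exact: ltW.
exact: (ler_wpM2r si nW).
Qed.
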